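(* Let $r>0$ and let $\mu:[0,\infty)\to\mathbb R$ and $\sigma:[0,\infty)\to(0,\infty)$ be globally Lipschitz continuous. Let $\psi\in C^2[0,\infty)$ be the non-negative increasing solution of $\frac{\sigma^2(x)}{2}f''(x)+\mu(x)f'(x)=rf(x)$ with $\psi(0)=0$, $\psi'(0)=1$. Fix $b\ge0$. If $x\mapsto\mu(x)-rx$ is non-decreasing on $[0,b)$ and $\mu(0)\ge0$, then $\psi$ is concave on $[0,b)$. *)

(* Defs.v *)
From Stdlib Require Import Reals Lra.
From Coquelicot Require Import Coquelicot.
Open Scope R_scope.

Definition nonneg (x : R) : Prop := 0 <= x.

Definition lipschitz_nonneg (g : R -> R) : Prop :=
  exists L : R, forall x y, 0 <= x -> 0 <= y -> Rabs (g x - g y) <= L * Rabs (x - y).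

(* f' is the derivative of f on [0, oo), taken within [0, oo)
   (so one-sided at the endpoint 0). *)
Definition deriv_on_nonneg (f f' : R -> R) : Prop :=
  forall x, 0 <= x ->
    filterlim (fun y => (f y - f x) / (y - x))
      (within (fun y => 0 <= y /\ y <> x) (locally x)) (locally (f' x)).

Definition continuous_on_nonneg (g : R -> R) : Prop :=
  forall x, 0 <= x -> filterlim g (within nonneg (locally x)) (locally (g x)).

Definition C2_nonneg (f f1 f2 : R -> R) : Prop :=
  deriv_on_nonneg f f1 /\ deriv_on_nonneg f1 f2 /\ continuous_on_nonneg f2.

Definition concave_on_0b (f : R -> R) (b : R) : Prop :=
  forall x y t, 0 <= x < b -> 0 <= y < b -> 0 <= t <= 1 ->
    t * f x + (1 - t) * f y <= f (t * x + (1 - t) * y).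

(* Main.v *)
Require Import Defs.
From Stdlib Require Import Reals Lra.
From Coquelicot Require Import Coquelicot.
Open Scope R_scope.


Definition cont_nn (f : R -> R) (x : R) : Prop :=
  forall eps, 0 < eps -> exists d, 0 < d /\
    forall y, 0 <= y -> Rabs (y - x) < d -> Rabs (f y - f x) < eps.

Lemma derivE f f' : deriv_on_nonneg f f' -> forall x, 0 <= x ->
  forall eps, 0 < eps -> exists d, 0 < d /\ forall y, 0 <= y -> y <> x ->
    Rabs (y - x) < d -> Rabs ((f y - f x) / (y - x) - f' x) < eps.
Proof.
  intros H x hx eps he.
  destruct (proj1 (filterlim_locally _ _) (H x hx) (mkposreal eps he)) as [d Hd].
  exists d. split. apply cond_pos. intros y hy hyx hd.
  exact (Hd y hd (conj hy hyx)).
Qed.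

Lemma deriv_is_derive f f' : deriv_on_nonneg f f' -> forall x, 0 < x ->
  is_derive f x (f' x).
Proof.
  intros H x hx. apply is_derive_Reals. intros eps he.
  destruct (derivE f f' H x (Rlt_le _ _ hx) eps he) as [d [hd Hd]].
  assert (hm : 0 < Rmin d x) by (apply Rmin_glb_lt; lra).
  exists (mkposreal _ hm). intros h hh0 hh. simpl in hh.
  pose proof (Rmin_l d x). pose proof (Rmin_r d x).
  assert (E : x + h - x = h) by ring.
  specialize (Hd (x + h)). rewrite E in Hd. apply Hd.
  - apply Rabs_def2 in hh. lra.
  - intro C. apply hh0. lra.
  - lra.
Qed.

Lemma deriv_cont f f' : deriv_on_nonneg f f' -> forall x, 0 <= x -> cont_nn f x.
Proof.
  intros H x hx eps he.
  destruct (derivE f f' H x hx 1 Rlt_0_1) as [d [hd Hd]].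
  set (K := Rabs (f' x) + 1).
  assert (hK : 0 < K) by (unfold K; pose proof (Rabs_pos (f' x)); lra).
  assert (hm : 0 < Rmin d (eps / K)) by (apply Rmin_glb_lt; [lra | apply Rdiv_lt_0_compat; lra]).
  exists (Rmin d (eps / K)). split; [exact hm|]. intros y hy hyd.
  pose proof (Rmin_l d (eps / K)). pose proof (Rmin_r d (eps / K)).
  destruct (Req_dec y x) as [->|hne].
  - rewrite Rminus_diag, Rabs_R0. lra.
  - specialize (Hd y hy hne ltac:(lra)).
    assert (hyx : y - x <> 0) by lra.
    assert (Eq : f y - f x = ((f y - f x) / (y - x)) * (y - x)) by (field; exact hyx).
    rewrite Eq, Rabs_mult.
    assert (Hq : Rabs ((f y - f x) / (y - x)) <= K).
    { unfold K. pose proof (Rabs_triang ((f y - f x) / (y - x) - f' x) (f' x)) as HT.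
      replace ((f y - f x) / (y - x) - f' x + f' x) with ((f y - f x) / (y - x)) in HT by ring. lra. }
    assert (HL : Rabs (y - x) < eps / K) by lra.
    apply Rle_lt_trans with (K * Rabs (y - x)).
    + apply Rmult_le_compat_r; [apply Rabs_pos | exact Hq].
    + apply Rmult_lt_reg_l with (/ K). apply Rinv_0_lt_compat; lra.
      replace (/ K * (K * Rabs (y - x))) with (Rabs (y - x)) by (field; lra).
      replace (/ K * eps) with (eps / K) by (unfold Rdiv; ring). exact HL.
Qed.

Lemma contE g : continuous_on_nonneg g -> forall x, 0 <= x -> cont_nn g x.
Proof.
  intros H x hx eps he.
  destruct (proj1 (filterlim_locally _ _) (H x hx) (mkposreal eps he)) as [d Hd].
  exists d. split. apply cond_pos. intros y hy hd. exact (Hd y hd hy).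
Qed.

Lemma cont_lin f x A B C : cont_nn f x -> cont_nn (fun w => A + B * w + C * f w) x.
Proof.
  intros H eps he.
  set (K := Rabs B + Rabs C + 1).
  assert (hK : 0 < K) by (unfold K; pose proof (Rabs_pos B); pose proof (Rabs_pos C); lra).
  destruct (H (eps / K / 2)) as [d [hd Hd]]. apply Rdiv_lt_0_compat; [apply Rdiv_lt_0_compat|]; lra.
  assert (hm : 0 < Rmin d (eps / K / 2)).
  { apply Rmin_glb_lt; [lra|]. apply Rdiv_lt_0_compat; [apply Rdiv_lt_0_compat|]; lra. }
  exists (Rmin d (eps / K / 2)). split; [exact hm|]. intros y hy hyd.
  pose proof (Rmin_l d (eps / K / 2)). pose proof (Rmin_r d (eps / K / 2)).
  specialize (Hd y hy ltac:(lra)).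
  replace (A + B * y + C * f y - (A + B * x + C * f x)) with (B * (y - x) + C * (f y - f x)) by ring.
  eapply Rle_lt_trans. apply Rabs_triang. rewrite !Rabs_mult.
  assert (Rabs (y - x) < eps / K / 2) by lra.
  assert (hB : Rabs B <= K) by (unfold K; pose proof (Rabs_pos C); lra).
  assert (hC : Rabs C <= K) by (unfold K; pose proof (Rabs_pos B); lra).
  assert (Rabs B * Rabs (y - x) <= K * (eps / K / 2)).
  { apply Rmult_le_compat; try apply Rabs_pos; lra. }
  assert (Rabs C * Rabs (f y - f x) <= K * (eps / K / 2)).
  { apply Rmult_le_compat; try apply Rabs_pos; lra. }
  replace (K * (eps / K / 2)) with (eps / 2) in * by (field; lra).
  assert (Rabs B * Rabs (y - x) + Rabs C * Rabs (f y - f x) <= eps) by lra.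
  assert (Rabs C * Rabs (f y - f x) < K * (eps / K / 2) \/ Rabs C * Rabs (f y - f x) <= eps/2) by lra.
  destruct (Req_dec (Rabs B) 0) as [hB0|hB0].
  - rewrite hB0. assert (Rabs C * Rabs (f y - f x) < eps).
    { apply Rle_lt_trans with (K * Rabs (f y - f x)).
      apply Rmult_le_compat_r; [apply Rabs_pos|lra].
      apply Rlt_le_trans with (K * (eps / K / 2)).
      apply Rmult_lt_compat_l; lra. replace (K * (eps / K / 2)) with (eps/2) by (field; lra). lra. }
    lra.
  - assert (Rabs B * Rabs (y - x) < eps / 2).
    { apply Rle_lt_trans with (K * Rabs (y - x)).
      apply Rmult_le_compat_r; [apply Rabs_pos|lra].
      apply Rlt_le_trans with (K * (eps / K / 2)).
      apply Rmult_lt_compat_l; lra. replace (K * (eps / K / 2)) with (eps/2) by (field; lra). lra. }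
    lra.
Qed.

Lemma lin_derive f df x A B C : is_derive f x df ->
  is_derive (fun w => A + B * w + C * f w) x (B + C * df).
Proof.
  intros H.
  replace (B + C * df) with (0 + B * 1 + C * df) by ring.
  apply (is_derive_plus (fun w => A + B * w) (fun w => C * f w)).
  apply (is_derive_plus (fun w => A) (fun w => B * w)).
  exact (@is_derive_const R_AbsRing R_NormedModule A x).
  apply is_derive_scal. exact (@is_derive_id R_AbsRing x).
  apply is_derive_scal. exact H.
Qed.

Lemma mono_lin f f' a c A B C : deriv_on_nonneg f f' -> 0 <= a < c ->
  (forall w, a < w < c -> 0 <= B + C * f' w) ->
  A + B * a + C * f a <= A + B * c + C * f c.
Proof.
  intros Hd hac Hpos.
  set (g := fun w => A + B * w + C * f w).
  change (g a <= g c).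
  assert (Hin : forall a' c', a < a' -> a' < c' -> c' < c -> g a' <= g c').
  { intros a' c' h1 h2 h3.
    destruct (MVT_gen g a' c' (fun w => B + C * f' w)) as [z [hz Ez]].
    - intros w hw. rewrite Rmin_left in hw by lra. rewrite Rmax_right in hw by lra.
      apply lin_derive. apply (deriv_is_derive f f' Hd). lra.
    - intros w hw. rewrite Rmin_left in hw by lra. rewrite Rmax_right in hw by lra.
      apply continuity_pt_filterlim. apply (@ex_derive_continuous R_AbsRing R_NormedModule).
      exists (B + C * f' w). apply lin_derive. apply (deriv_is_derive f f' Hd). lra.
    - rewrite Rmin_left in hz by lra. rewrite Rmax_right in hz by lra.
      assert (0 <= B + C * f' z) by (apply Hpos; lra).
      assert (0 <= (B + C * f' z) * (c' - a')) by (apply Rmult_le_pos; lra).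
      lra. }
  destruct (Rle_or_lt (g a) (g c)) as [H|H]; [exact H|exfalso].
  set (eps := (g a - g c) / 2).
  assert (he : 0 < eps) by (unfold eps; lra).
  destruct (cont_lin f a A B C (deriv_cont f f' Hd a ltac:(lra)) eps he) as [da [hda Ha]].
  destruct (cont_lin f c A B C (deriv_cont f f' Hd c ltac:(lra)) eps he) as [dc [hdc Hc]].
  set (del := Rmin (Rmin da dc) (c - a) / 3).
  assert (hdel : 0 < del).
  { unfold del. apply Rdiv_lt_0_compat; [|lra]. apply Rmin_glb_lt; [apply Rmin_glb_lt|]; lra. }
  assert (hdel1 : del < da).
  { unfold del. pose proof (Rmin_l (Rmin da dc) (c - a)). pose proof (Rmin_l da dc). lra. }
  assert (hdel2 : del < dc).
  { unfold del. pose proof (Rmin_l (Rmin da dc) (c - a)). pose proof (Rmin_r da dc). lra. }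
  assert (hdel3 : 3 * del <= c - a).
  { unfold del. pose proof (Rmin_r (Rmin da dc) (c - a)). lra. }
  specialize (Ha (a + del) ltac:(lra)).
  specialize (Hc (c - del) ltac:(lra)).
  replace (a + del - a) with del in Ha by ring.
  replace (c - del - c) with (- del) in Hc by ring.
  rewrite Rabs_Ropp in Hc. rewrite Rabs_right in Ha, Hc by lra.
  specialize (Ha ltac:(lra)). specialize (Hc ltac:(lra)).
  apply Rabs_def2 in Ha. apply Rabs_def2 in Hc.
  specialize (Hin (a + del) (c - del) ltac:(lra) ltac:(lra) ltac:(lra)).
  unfold eps, g in *. cbv beta in *. lra.
Qed.

Theorem lemmaA3 (r : R) (mu sigma psi psi1 psi2 : R -> R) (b : R)
  (hr : 0 < r)
  (hmu : lipschitz_nonneg mu)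
  (hsigL : lipschitz_nonneg sigma)
  (hsigpos : forall x, 0 <= x -> 0 < sigma x)
  (hC2 : C2_nonneg psi psi1 psi2)
  (hode : forall x, 0 <= x ->
     (sigma x) ^ 2 / 2 * psi2 x + mu x * psi1 x = r * psi x)
  (hnn : forall x, 0 <= x -> 0 <= psi x)
  (hinc : forall x y, 0 <= x -> x < y -> psi x < psi y)
  (h0 : psi 0 = 0) (h1 : psi1 0 = 1)
  (hb : 0 <= b)
  (hmono : forall x y, 0 <= x -> x <= y -> y < b -> mu x - r * x <= mu y - r * y)
  (hmu0 : 0 <= mu 0) :
  concave_on_0b psi b.
Proof.
  destruct hC2 as [D0 [D1 C2]].
  assert (P1 : forall x, 0 <= x -> 0 <= psi1 x).
  { intros x hx. destruct (Rle_or_lt 0 (psi1 x)) as [h|h]; [exact h|exfalso].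
    destruct (derivE psi psi1 D0 x hx (- psi1 x) ltac:(lra)) as [d [hd Hd]].
    specialize (Hd (x + d / 2) ltac:(lra) ltac:(lra)).
    replace (x + d / 2 - x) with (d / 2) in Hd by ring.
    rewrite Rabs_right in Hd by lra. specialize (Hd ltac:(lra)).
    assert (0 < (psi (x + d / 2) - psi x) / (d / 2)).
    { apply Rdiv_lt_0_compat; [|lra]. pose proof (hinc x (x + d/2) hx ltac:(lra)). lra. }
    apply Rabs_def2 in Hd. lra. }
  assert (Sg : forall x, 0 <= x -> 0 < sigma x ^ 2 / 2).
  { intros x hx. pose proof (hsigpos x hx). assert (0 < sigma x ^ 2) by (apply pow_lt; lra). lra. }
  assert (P20 : psi2 0 <= 0).
  { pose proof (hode 0 (Rle_refl 0)) as E. rewrite h0, h1 in E. pose proof (Sg 0 (Rle_refl 0)).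
    destruct (Rle_or_lt (psi2 0) 0) as [h|h]; [exact h|exfalso].
    assert (0 < sigma 0 ^ 2 / 2 * psi2 0) by (apply Rmult_lt_0_compat; lra). lra. }
  assert (KEY : forall x1, 0 <= x1 < b -> psi2 x1 <= 0).
  { intros x1 hx1. destruct (Rle_or_lt (psi2 x1) 0) as [h|h]; [exact h|exfalso].
    set (E := fun x => 0 <= x <= x1 /\ psi2 x <= 0).
    assert (hx1p : 0 < x1).
    { destruct (Req_dec x1 0) as [->|]; [lra|lra]. }
    destruct (completeness E) as [s [Hub Hlub]].
    { exists x1. intros y [hy _]. lra. }
    { exists 0. split; [lra|exact P20]. }
    assert (hs0 : 0 <= s) by (apply Hub; split; [lra|exact P20]).
    assert (hs1 : s <= x1) by (apply Hlub; intros y [hy _]; lra).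
    assert (hs2 : psi2 s <= 0).
    { destruct (Rle_or_lt (psi2 s) 0) as [h'|h']; [exact h'|exfalso].
      destruct (contE psi2 C2 s hs0 (psi2 s) h') as [d [hd Hd]].
      assert (s <= s - d); [|lra].
      apply Hlub. intros e [[he0 he1] he2].
      destruct (Rle_or_lt e (s - d)) as [q|q]; [exact q|exfalso].
      assert (e <= s) by (apply Hub; split; [lra|exact he2]).
      specialize (Hd e he0). rewrite Rabs_left1 in Hd by lra. specialize (Hd ltac:(lra)).
      apply Rabs_def2 in Hd. lra. }
    assert (hsx : s < x1) by (destruct (Req_dec s x1) as [->|]; lra).
    assert (Pos : forall w, s < w <= x1 -> 0 < psi2 w).
    { intros w hw. destruct (Rle_or_lt (psi2 w) 0) as [q|q]; [|exact q].
      assert (w <= s) by (apply Hub; split; [lra|exact q]). lra. }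
    assert (I1 : forall w, s <= w < x1 -> psi1 w <= psi1 x1).
    { intros w hw. pose proof (mono_lin psi1 psi2 w x1 0 0 1 D1 ltac:(lra)) as M.
      assert (forall u, w < u < x1 -> 0 <= 0 + 1 * psi2 u).
      { intros u hu. pose proof (Pos u ltac:(lra)). lra. }
      specialize (M H). lra. }
    assert (I2 : psi x1 - psi s <= psi1 x1 * (x1 - s)).
    { pose proof (mono_lin psi psi1 s x1 0 (psi1 x1) (-1) D0 ltac:(lra)) as M.
      assert (forall u, s < u < x1 -> 0 <= psi1 x1 + -1 * psi1 u).
      { intros u hu. pose proof (I1 u ltac:(lra)). lra. }
      specialize (M H). lra. }
    assert (I3 : psi1 s <= psi1 x1) by (apply I1; lra).
    pose proof (hmono s x1 hs0 ltac:(lra) ltac:(lra)) as M1.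
    pose proof (hmono 0 s (Rle_refl 0) hs0 ltac:(lra)) as M2.
    pose proof (hode s hs0) as Es. pose proof (hode x1 ltac:(lra)) as Ex.
    pose proof (Sg s hs0). pose proof (Sg x1 ltac:(lra)).
    assert (F1 : mu x1 * psi1 x1 - r * psi x1 < 0).
    { assert (0 < sigma x1 ^ 2 / 2 * psi2 x1) by (apply Rmult_lt_0_compat; lra). lra. }
    assert (F0 : 0 <= mu s * psi1 s - r * psi s).
    { assert (0 <= sigma s ^ 2 / 2 * (- psi2 s)) by (apply Rmult_le_pos; lra). lra. }
    set (ms := mu s - r * s) in *. set (mx := mu x1 - r * x1) in *.
    assert (Ems : mu s = ms + r * s) by (unfold ms; ring).
    assert (Emx : mu x1 = mx + r * x1) by (unfold mx; ring).
    rewrite Ems in F0. rewrite Emx in F1.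
    assert (hms : 0 <= ms) by lra.
    pose proof (P1 s hs0). pose proof (P1 x1 ltac:(lra)).
    assert (A1 : ms * psi1 s <= mx * psi1 x1).
    { apply Rle_trans with (ms * psi1 x1).
      apply Rmult_le_compat_l; lra. apply Rmult_le_compat_r; lra. }
    assert (A2 : 0 <= r * (s * (psi1 x1 - psi1 s))).
    { apply Rmult_le_pos; [lra|]. apply Rmult_le_pos; lra. }
    assert (A3 : r * (psi x1 - psi s) <= r * (psi1 x1 * (x1 - s))).
    { apply Rmult_le_compat_l; lra. }
    nra. }
  assert (DEC : forall u v, 0 <= u -> u <= v -> v < b -> psi1 v <= psi1 u).
  { intros u v hu huv hv. destruct (Req_dec u v) as [->|hne]; [lra|].
    pose proof (mono_lin psi1 psi2 u v 0 0 (-1) D1 ltac:(lra)) as M.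
    assert (forall w, u < w < v -> 0 <= 0 + -1 * psi2 w).
    { intros w hw. pose proof (KEY w ltac:(lra)). lra. }
    specialize (M H). lra. }
  assert (TAN : forall z w, 0 <= z < b -> 0 <= w < b -> psi w <= psi z + psi1 z * (w - z)).
  { intros z w hz hw. destruct (Rtotal_order z w) as [q|[q|q]].
    - pose proof (mono_lin psi psi1 z w 0 (psi1 z) (-1) D0 ltac:(lra)) as M.
      assert (forall u, z < u < w -> 0 <= psi1 z + -1 * psi1 u).
      { intros u hu. pose proof (DEC z u ltac:(lra) ltac:(lra) ltac:(lra)). lra. }
      specialize (M H). lra.
    - subst. lra.
    - pose proof (mono_lin psi psi1 w z 0 (- psi1 z) 1 D0 ltac:(lra)) as M.
      assert (forall u, w < u < z -> 0 <= - psi1 z + 1 * psi1 u).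
      { intros u hu. pose proof (DEC u z ltac:(lra) ltac:(lra) ltac:(lra)). lra. }
      specialize (M H). lra. }
  intros x y t hx hy ht.
  set (z := t * x + (1 - t) * y).
  assert (hz : 0 <= z < b).
  { unfold z. split.
    - assert (0 <= t * x) by (apply Rmult_le_pos; lra).
      assert (0 <= (1 - t) * y) by (apply Rmult_le_pos; lra). lra.
    - assert (t * x <= t * b) by (apply Rmult_le_compat_l; lra).
      assert ((1 - t) * y <= (1 - t) * b) by (apply Rmult_le_compat_l; lra).
      destruct (Rle_or_lt t 0) as [q|q].
      + assert (t = 0) by lra. subst t. lra.
      + assert (t * x < t * b) by (apply Rmult_lt_compat_l; lra). lra. }
  pose proof (TAN z x hz hx). pose proof (TAN z y hz hy).
  assert (t * psi x <= t * (psi z + psi1 z * (x - z))) by (apply Rmult_le_compat_l; lra).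
  assert ((1 - t) * psi y <= (1 - t) * (psi z + psi1 z * (y - z))) by (apply Rmult_le_compat_l; lra).
  assert (t * (psi z + psi1 z * (x - z)) + (1 - t) * (psi z + psi1 z * (y - z)) = psi z)
    by (unfold z; ring).
  lra.
Qed.
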